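(* Let $h\in\mathcal H$, $k_0=k_0(h)$, $h_0=h(k_0)$, and let $d>h_0$ be an integer. If $h(k)\ge (d-k+1)\,h(k-1)$ for all integers $k$ with $k_0+1\le k\le d$, then $\operatorname{hdepth}(h)\ge d$.
   Context: $\mathcal H$ denotes the set of nonzero functions $h:\mathbb Z\to\mathbb Z_{\ge 0}$ such that $h(j)=0$ for all sufficiently negative $j$. For $h\in\mathcal H$ and integers $k\le d$, set $\beta_k^d(h)=\sum_{j\le k}(-1)^{k-j}\binom{d-j}{k-j}h(j)$, and $\operatorname{hdepth}(h)=\max\{d\in\mathbb Z:\ \beta_k^d(h)\ge 0\text{ for all integers }k\le d\}$. Also $k_0(h)=\min\{j: h(j)>0\}$. *)

(* Defs.v *)
From mathcomp Require Import all_boot all_order all_algebra.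
From Stdlib Require Import ClassicalEpsilon.
Set Implicit Arguments. Unset Strict Implicit. Unset Printing Implicit Defensive.
Import Order.TTheory GRing.Theory Num.Theory.
Local Open Scope ring_scope.

Definition in_H (h : int -> nat) : Prop :=
  (exists j : int, h j != 0%N) /\ (exists N : int, forall j : int, j < N -> h j = 0%N).

Definition is_k0 (h : int -> nat) (k0 : int) : Prop :=
  (0 < h k0)%N /\ forall j : int, j < k0 -> h j = 0%N.

Definition lowb (h : int -> nat) : int :=
  epsilon (inhabits 0) (fun N : int => forall j : int, j < N -> h j = 0%N).

(* beta_k^d(h) = sum_{j <= k} (-1)^(k-j) C(d-j, k-j) h(j).
   Terms with j < lowb h vanish, so the sum runs over j = k - i, i = 0..k - lowb h. *)
Definition beta (h : int -> nat) (k d : int) : int :=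
  \sum_(i < (absz (k - lowb h)).+1 | lowb h <= k)
     ((-1) ^+ i * ('C(absz (d - (k - i%:Z))%R, i))%:Z * (h (k - i%:Z))%:Z).

Definition hdepth_ok (h : int -> nat) (d : int) : Prop :=
  forall k : int, k <= d -> 0 <= beta h k d.

Definition is_hdepth (h : int -> nat) (m : int) : Prop :=
  hdepth_ok h m /\ forall d : int, hdepth_ok h d -> d <= m.

(* Main.v *)
Require Import Defs.
From mathcomp Require Import all_boot all_order all_algebra.
From mathcomp Require Import zify.
From Stdlib Require Import ClassicalEpsilon Classical.
Import Order.TTheory GRing.Theory Num.Theory.
Local Open Scope ring_scope.

Lemma alt_sum (N : nat) : forall b : nat -> int, (forall i, 0 <= b i) ->
  (forall i, b i.+1 <= b i) ->
  0 <= \sum_(i < N.+1) (-1) ^+ i * b i <= b 0%N.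
Proof.
elim: N => [|N IH] b b0 bdec.
  by rewrite big_ord_recl big_ord0 expr0 mul1r addr0 lexx b0.
rewrite big_ord_recl expr0 mul1r.
have /andP[H1 H2] := IH (fun i => b i.+1) (fun i => b0 i.+1) (fun i => bdec i.+1).
have -> : \sum_(i < N.+1) (-1) ^+ (@bump 0 i) * b (@bump 0 i)
   = - \sum_(i < N.+1) (-1) ^+ i * b i.+1.
  rewrite -sumrN; apply: eq_bigr => i _.
  by rewrite /bump /= exprS mulN1r mulNr.
have Hb := bdec 0%N; change (b (nat_of_ord (@ord0 N.+1))) with (b 0%N); apply/andP; split; [rewrite subr_ge0; exact: le_trans H2 Hb | rewrite gerBl; exact: H1].
Qed.

Lemma main_ok (h : int -> nat) (k0 d : int) : is_k0 h k0 ->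
  (forall k : int, k0 + 1 <= k <= d -> ((d - k + 1) * (h (k - 1))%:Z <= (h k)%:Z)) ->
  hdepth_ok h d.
Proof.
move=> [hk0 hlow] hyp k kd.
rewrite /beta big_mkcond /=.
case: (lowb h <= k); last by rewrite big1.
set b := fun i : nat => ('C(absz (d - (k - i%:Z))%R, i))%:Z * (h (k - i%:Z))%:Z.
have -> : \sum_(i < (absz (k - lowb h)).+1)
    ((-1) ^+ i * ('C(absz (d - (k - i%:Z))%R, i))%:Z * (h (k - i%:Z))%:Z)
    = \sum_(i < (absz (k - lowb h)).+1) (-1) ^+ i * b i.
  by apply: eq_bigr => i _; rewrite /b mulrA.
suff /andP[] : 0 <= \sum_(i < (absz (k - lowb h)).+1) (-1) ^+ i * b i <= b 0%N by [].
apply: alt_sum; first by move=> i; rewrite /b.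
move=> i; rewrite /b.
set j := k - i%:Z.
have -> : k - (i.+1)%:Z = j - 1 by rewrite /j; lia.
have [jl|jl] := ltP (j - 1) k0.
  by rewrite hlow // mulr0.
have Hn : d - j = (absz (d - j)%R)%:Z by rewrite gez0_abs //; rewrite /j; lia.
have -> : absz (d - (j - 1))%R = (absz (d - j)%R).+1.
  lia.
have Hh := hyp j.
have := Hh (ltac:(apply/andP; split; rewrite /j; lia)).
rewrite Hn.
set n := absz (d - j)%R.
set H1 := h (j - 1); set H0 := h j.
move=> Hi.
have Hnat : (n.+1 * H1 <= H0)%N by lia.
rewrite -!PoszM lez_nat.
have E := mul_bin_diag n.+1 i.
rewrite /= in E.
apply: (leq_trans (n := ('C(n.+1, i.+1) * i.+1) * H1)%N).
  by rewrite leq_mul2r leq_pmulr // orbT.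
by rewrite [('C(_,_) * _)%N]mulnC -E -mulnA [('C(n, i) * H1)%N]mulnC mulnA mulnC leq_mul2l Hnat orbT.
Qed.

Lemma lowb_spec (h : int -> nat) : in_H h -> forall j : int, j < lowb h -> h j = 0%N.
Proof.
move=> [_ HN]; rewrite /lowb.
exact: (epsilon_spec (inhabits 0) (fun N : int => forall j : int, j < N -> h j = 0%N) HN).
Qed.

Lemma bound (h : int -> nat) (k0 d : int) : in_H h -> is_k0 h k0 ->
  hdepth_ok h d -> d <= k0 + (h (k0 + 1))%:Z.
Proof.
move=> HH [hk0 hlow] ok.
have [dk|dk] := ltP d (k0 + 1); first by lia.
have lk : lowb h <= k0.
  rewrite leNgt; apply/negP => /(@lowb_spec h HH _) E; by rewrite E in hk0.
have := ok _ dk; rewrite /beta.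
have -> : lowb h <= k0 + 1 by lia.
have -> : absz (k0 + 1 - lowb h)%R = (absz (k0 - lowb h)%R).+1 by lia.
rewrite !big_ord_recl big1; last first.
  move=> i _; rewrite hlow ?mulr0 //=. rewrite /bump /=. lia.
rewrite /= /bump /= !expr0 !expr1 !mul1r bin0 bin1 addr0 subr0.
have -> : k0 + 1 - 1 = k0 by lia.
have -> : (absz (d - k0)%R)%:Z = d - k0 by lia.
move=> H.
have hp : 1 <= (h k0)%:Z by lia.
nia.
Qed.

Theorem proposition1p8 (h : int -> nat) (k0 d : int) :
  in_H h -> is_k0 h k0 ->
  (h k0)%:Z < d ->
  (forall k : int, k0 + 1 <= k <= d -> ((d - k + 1) * (h (k - 1))%:Z <= (h k)%:Z)) ->
  exists m : int, is_hdepth h m /\ d <= m.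
Proof.
move=> HH Hk0 _ hyp.
have okd := @main_ok h k0 d Hk0 hyp.
set B := k0 + (h (k0 + 1))%:Z.
have Bd : forall d', hdepth_ok h d' -> d' <= B := fun d' => @bound h k0 d' HH Hk0.
suff: forall n : nat, forall d0, hdepth_ok h d0 -> B - d0 <= n%:Z ->
  exists m, is_hdepth h m /\ d0 <= m.
  move=> S; apply: (S (absz (B - d))%R d okd); have := Bd d okd; lia.
elim=> [|n IH] d0 ok0 Hn.
  exists d0; split; [split=> // d' /Bd|]; lia.
destruct (classic (forall d', hdepth_ok h d' -> d' <= d0)) as [Hm|Hm].
  by exists d0; split.
apply not_all_ex_not in Hm; destruct Hm as [d1 Hd1].
apply imply_to_and in Hd1; destruct Hd1 as [ok1 lt1].
have lt1' : d0 < d1 by rewrite ltNge; apply/negP.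
have [m [Hm dm]] := IH d1 ok1 (ltac:(lia)).
exists m; split => //; lia.
Qed.
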